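(* Let $K\ge 2$ and $L\ge 2$ be integers and let $s_1,\dots,s_K\in[0,1]$ be offers that are not all zero. Consider the symmetric $L$-player responder game in which each responder's strategy is a probability vector $p=(p_1,\dots,p_K)$ (with $p_i\ge 0$, $\sum_i p_i=1$), $p_i$ being the probability of choosing proposer $i$; a responder who chooses proposer $i$ receives $s_i$ with probability $1/N_i$ and $0$ otherwise, where $N_i$ is the total number of responders who chose proposer $i$ (all choices being made independently). Then this game possesses a unique evolutionarily stable strategy.
   Context: This is the responder stage of the Multi-Proposer-Multi-Responder Ultimatum Game with $K$ proposers and $L$ responders: each proposer $i$ offers a share $s_i$ of a reward of size one; each responder independently selects one proposer according to its mixed strategy; a proposer selected by at least one responder receives $1-s_i$, otherwise $0$; among the responders who selected proposer $i$, exactly one chosen uniformly at random receives $s_i$, the rest receive $0$. Responders are drawn from an infinite population. For a symmetric $L$-player game, write $E(q;\,r)$ for the expected payoff of a focal player using strategy $q$ when each of the other $L-1$ players independently uses strategy $r$ (equivalently, is drawn from a population whose average strategy is $r$). A strategy $p$ is evolutionarily stable if for every strategy $q\neq p$ there is $\bar\varepsilon>0$ such that for all $\varepsilon\in(0,\bar\varepsilon)$, $E(p;\,(1-\varepsilon)p+\varepsilon q)>E(q;\,(1-\varepsilon)p+\varepsilon q)$. *)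

(* Defs.v *)
From mathcomp Require Import all_boot all_order all_algebra.
From mathcomp Require Import reals.
Set Implicit Arguments. Unset Strict Implicit. Unset Printing Implicit Defensive.
Import Order.TTheory GRing.Theory Num.Theory.
Local Open Scope ring_scope.

Definition is_strategy (R : realType) (K : nat) (p : {ffun 'I_K -> R}) : Prop :=
  (forall i, 0 <= p i) /\ \sum_(i < K) p i = 1.

(* Expected payoff E(q; r) of a focal responder using q when each of the other
   L-1 responders independently uses r.  f : 'I_(L-1) -> 'I_K is the profile of
   choices of the others (probability \prod_j r (f j)); if the focal player
   chooses c, it receives s c with probability 1/N_c, N_c = 1 + #{j | f j = c}. *)
Definition payoff (R : realType) (K L : nat) (s : 'I_K -> R)
    (q r : {ffun 'I_K -> R}) : R :=
  \sum_(c < K) \sum_(f : {ffun 'I_(L.-1) -> 'I_K})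
     q c * (\prod_(j < L.-1) r (f j)) * (s c / (#|[set j | f j == c]|.+1)%:R).

Definition mixture (R : realType) (K : nat) (e : R) (p q : {ffun 'I_K -> R})
  : {ffun 'I_K -> R} := [ffun i => (1 - e) * p i + e * q i].

Definition is_ESS (R : realType) (K L : nat) (s : 'I_K -> R)
    (p : {ffun 'I_K -> R}) : Prop :=
  is_strategy p /\
  forall q : {ffun 'I_K -> R}, is_strategy q -> q <> p ->
    exists2 eb : R, 0 < eb & forall e : R, 0 < e -> e < eb ->
      payoff L s q (mixture e p q) < payoff L s p (mixture e p q).

(* Main.v *)
Require Import Defs.
From mathcomp Require Import all_boot all_order all_algebra.
From mathcomp Require Import reals.
From mathcomp Require Import ring lra.
From mathcomp Require Import boolp classical_sets topology normedtype derive.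
Import Order.TTheory GRing.Theory Num.Theory.
Import numFieldNormedType.Exports.
Local Open Scope ring_scope.

Section Comb.
Variable R : realType.
Variables (K n : nat) (r : {ffun 'I_K -> R}) (c : 'I_K).
Hypothesis r1 : \sum_(i<K) r i = 1.
Definition cnt (f : {ffun 'I_n -> 'I_K}) := #|[set j | f j == c]|.

Lemma poly_id : \sum_(f : {ffun 'I_n -> 'I_K}) (\prod_(j<n) r (f j)) *: 'X^(cnt f)
   = ((1 - r c)%:P + (r c)%:P * 'X)^+n.
Proof.
have inner: \sum_(d < K) (r d)%:P * 'X^(d == c) = (1 - r c)%:P + (r c)%:P * 'X.
  rewrite (bigD1 c) //= eqxx (expr1 'X) addrC; congr (_ + _).
  have : \sum_(d < K | d != c) r d = 1 - r c.
    by rewrite -r1 [in RHS](bigD1 c) //= addrC addrK.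
  move=> <-; rewrite rmorph_sum /=; apply: eq_bigr => d /negbTE ->.
  by rewrite expr0 mulr1.
rewrite -inner -[n in _ ^+ n]card_ord -prodr_const bigA_distr_bigA /=.
apply: eq_bigr => f _.
rewrite big_split /= -rmorph_prod prodrXr mul_polyC; congr (_ *: 'X^_).
rewrite /cnt cardsE -sum1_card big_mkcond /=.
by apply: eq_bigr => j _; rewrite -[_ \in _]/(f j == c); case: (f j == c).
Qed.


Lemma coef_binom (x y : R) (k : nat) : (k < n.+1)%N ->
  ((y%:P + x%:P * 'X)^+n)`_k = 'C(n,k)%:R * x^+k * y^+(n-k).
Proof.
move=> kn; rewrite exprDn.
rewrite (eq_bigr (fun i : 'I_n.+1 => (y ^+ (n - i) * x ^+ i *+ 'C(n, i)) *: 'X^i)); last first.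
  move=> i _; rewrite exprMn -!rmorphXn /= mulrA -rmorphM /= -mul_polyC.
  by rewrite -mulrnAl -rmorphMn.
rewrite coef_sumMXn (big_pred1 (Ordinal kn)) /=; last by move=> i; rewrite /= -val_eqE.
by rewrite -mulr_natl (mulrC (y ^+ _)) mulrA.
Qed.

Lemma cnt_le f : (cnt f < n.+1)%N.
Proof. by rewrite ltnS /cnt -[X in (_ <= X)%N](card_ord n) max_card. Qed.

Lemma count_sum (F : nat -> R) :
  \sum_(f : {ffun 'I_n -> 'I_K}) (\prod_(j<n) r (f j)) * F (cnt f) =
  \sum_(k < n.+1) F k * ('C(n,k)%:R * (r c)^+k * (1 - r c)^+(n-k)).
Proof.
have Hk (k : 'I_n.+1) : \sum_(f | cnt f == k) \prod_(j<n) r (f j) =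
    'C(n,k)%:R * (r c)^+k * (1 - r c)^+(n-k).
  by rewrite -coef_binom // -poly_id coef_sumMXn.
rewrite (eq_bigr (fun f => \sum_(k < n.+1 | cnt f == k) (\prod_(j<n) r (f j)) * F k)); last first.
  move=> f _; rewrite (big_pred1 (Ordinal (cnt_le f))) //.
rewrite (exchange_big_dep xpredT) //=; apply: eq_bigr => k _.
by rewrite -mulr_suml Hk mulrC.
Qed.

End Comb.

Section G.
Variable R : realType.
Definition g (n : nat) (x : R) := (n.+1%:R)^-1 * \sum_(j < n.+1) (1 - x)^+j.

Lemma G_eq n x : \sum_(k < n.+1) ((k.+1)%:R)^-1 * ('C(n,k)%:R * x^+k * (1 - x)^+(n-k)) = g n x.
Proof.
have n1 : (n.+1%:R : R) != 0 by rewrite pnatr_eq0.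
have [->|x0] := eqVneq x 0.
  rewrite big_ord_recl big1; last by move=> i _; rewrite expr0n /= mulr0 mul0r mulr0.
  rewrite /g subr0 (eq_bigr (fun _ => 1)); last by move=> i _; rewrite expr1n.
  by rewrite sumr_const card_ord bin0 !expr0 expr1n !mulr1 invr1 addr0 mulVf.
apply: (mulfI (mulf_neq0 x0 n1)).
rewrite /g [RHS]mulrA -[x * _ * _^-1]mulrA divff // mulr1.
have -> : x * \sum_(j < n.+1) (1 - x) ^+ j = 1 - (1 - x) ^+ n.+1.
  have h := subrX1 (1 - x) n.+1; rewrite (_ : 1 - x - 1 = - x) in h; last by rewrite addrAC subrr add0r.
  by rewrite -[RHS]opprB h mulNr opprK.
rewrite mulr_sumr.
rewrite (eq_bigr (fun k : 'I_n.+1 => 'C(n.+1, k.+1)%:R * x ^+ k.+1 * (1 - x) ^+ (n - k))); last first.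
  move=> k _.
  have H : (n.+1%:R * 'C(n, k)%:R : R) = (k.+1)%:R * 'C(n.+1, k.+1)%:R.
    by rewrite -!natrM mul_bin_diag.
  have k1 : ((k.+1)%:R : R) != 0 by rewrite pnatr_eq0.
  rewrite mulrA -(mulrA x) (mulrC _ (_^-1)) -!mulrA.
  rewrite (mulrA (n.+1%:R)) H -!mulrA.
  rewrite (mulrA ((k.+1)%:R^-1)) mulVf // mul1r.
  by rewrite exprS; rewrite mulrCA; congr (_ * _); rewrite !mulrA.
have h := exprDn (1 - x) x n.+1.
rewrite subrK expr1n big_ord_recl subn0 expr0 mulr1 bin0 mulr1n in h.
rewrite [X in _ = X - _]h addrAC subrr add0r; apply: eq_bigr => k _.
by rewrite lift0 subSS -mulr_natl; ring.
Qed.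

End G.

Section Pay.
Variable R : realType.
Lemma payoffE K L (s : 'I_K -> R) (q r : {ffun 'I_K -> R}) :
  \sum_(i < K) r i = 1 ->
  payoff L s q r = \sum_(c < K) q c * s c * g R (L.-1) (r c).
Proof.
move=> r1; rewrite /payoff; apply: eq_bigr => c _.
rewrite (eq_bigr (fun f : {ffun 'I_L.-1 -> 'I_K} => q c * s c * ((\prod_(j < L.-1) r (f j)) * ((cnt K (L.-1) c f).+1%:R)^-1))); last first.
  by move=> f _; rewrite /cnt; ring.
by rewrite -mulr_sumr (@count_sum R K (L.-1) r c r1 (fun k => (k.+1%:R)^-1)) G_eq.
Qed.
End Pay.

Section gprops.
Variable R : realType.
Lemma g_lt n (a b : R) : (0 < n)%N -> 0 <= a -> a < b -> b <= 1 -> g R n b < g R n a.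
Proof.
case: n => // m _ a0 ab b1; rewrite /g ltr_pM2l ?invr_gt0 ?ltr0Sn //.
rewrite big_ord_recl [X in _ < X]big_ord_recl ltrD2l.
rewrite big_ord_recl [X in _ < X]big_ord_recl.
apply: ltr_leD; first by rewrite /= !expr1 ltrD2l ltrN2.
apply: ler_sum => j _; apply: lerXn2r; rewrite ?nnegrE ?subr_ge0 ?lerD2l ?lerN2 //.
  by rewrite (le_trans (ltW ab)) ?lerN2.
exact: ltW.
Qed.

Lemma g_gt0 n (x : R) : 0 <= x -> x <= 1 -> 0 < g R n x.
Proof.
move=> x0 x1; rewrite /g mulr_gt0 ?invr_gt0 ?ltr0Sn // big_ord_recl expr0.
have : 0 <= \sum_(i < n) (1 - x) ^+ bump 0 i.
  by apply: sumr_ge0 => i _; rewrite exprn_ge0 // subr_ge0.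
move=> h; lra.
Qed.

Lemma g0 n : g R n 0 = 1.
Proof.
rewrite /g subr0 (eq_bigr (fun _ => 1)); last by move=> i _; rewrite expr1n.
by rewrite sumr_const card_ord mulVf // pnatr_eq0.
Qed.

Lemma g_horner n (x : R) :
  g R n x = (((n.+1%:R)^-1)%:P * \sum_(j < n.+1) (1 - 'X)^+j).[x].
Proof.
rewrite hornerM hornerC horner_sum /g; congr (_ * _); apply: eq_bigr => j _.
by rewrite horner_exp hornerD hornerN hornerX hornerC.
Qed.
End gprops.
Section cont.
Variable R : realType.
Lemma psi_cont (phi psi : R -> R) :
 (forall a b, 0 <= a -> a < b -> b <= 1 -> phi b < phi a) ->
 (forall w, 0 <= psi w <= 1) ->
 (forall w, psi w < 1 -> phi (psi w) <= w) ->
 (forall w, 0 < psi w -> w <= phi (psi w)) ->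
 continuous psi.
Proof.
move=> dec p01 pl1 pg0.
have dec' a b : 0 <= a -> a <= b -> b <= 1 -> phi b <= phi a.
  move=> a0; rewrite le_eqVlt => /orP[/eqP->|ab] b1; first by [].
  exact/ltW/dec.
move=> v; apply/cvgrPdist_lt => e e0.
have /andP[x0 x1] := p01 v.
have pl1v : psi v < 1 -> phi (psi v) <= v by exact: pl1.
have pg0v : 0 < psi v -> v <= phi (psi v) by exact: pg0.
move: x0 x1 pl1v pg0v; move xdef : (psi v) => x x0 x1 pl1v pg0v.
have U : \forall w \near v, psi w < x + e.
  case: (ltP (x + e/2) 1) => h.
    have xl1 : x < 1 by lra.
    have pa : phi (x + e/2) < v.
      apply: (lt_le_trans _ (pl1v xl1)); apply: dec; lra.
    near=> w.
    have : phi (x + e / 2) < w by near: w; apply: open_gt.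
    move=> hw; have /andP[w0 w1] := p01 w.
    case: (ltP (psi w) (x + e/2)) => h2; first by lra.
    have : w <= phi (psi w) by apply: pg0; lra.
    have : phi (psi w) <= phi (x + e/2) by apply: dec'; lra.
    lra.
  near=> w; have /andP[w0 w1] := p01 w; lra.
have D : \forall w \near v, x - e < psi w.
  case: (ltP 0 (x - e/2)) => h.
    have xg0 : 0 < x by lra.
    have pb : v < phi (x - e/2).
      apply: (le_lt_trans (pg0v xg0)); apply: dec; lra.
    near=> w.
    have : w < phi (x - e / 2) by near: w; apply: open_lt.
    move=> hw; have /andP[w0 w1] := p01 w.
    case: (ltP (x - e/2) (psi w)) => h2; first by lra.
    have : phi (psi w) <= w by apply: pl1; lra.
    have : phi (x - e/2) <= phi (psi w) by apply: dec'; lra.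
    lra.
  near=> w; have /andP[w0 w1] := p01 w; lra.
near=> w; rewrite ltr_distlC.
apply/andP; split; [near: w; exact: D | near: w; exact: U].
Unshelve. all: by end_near.
Qed.
End cont.

Section Key.
Variable R : realType.
Lemma mixtureE K e (p q : {ffun 'I_K -> R}) c : mixture e p q c = (1 - e) * p c + e * q c.
Proof. by rewrite /mixture ffunE. Qed.

Lemma key K L (s : 'I_K -> R) (p q : {ffun 'I_K -> R}) (v e : R) :
 (1 < L)%N -> (forall i, 0 <= s i) -> is_strategy p -> is_strategy q -> q <> p -> 0 < v ->
 (forall c, p c < 1 -> s c * g R L.-1 (p c) <= v) ->
 (forall c, 0 < p c -> v <= s c * g R L.-1 (p c)) ->
 0 < e -> e <= 1 ->
 payoff L s q (mixture e p q) < payoff L s p (mixture e p q).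
Proof.
move=> L1 s0 [p0 p1] [q0 q1] qp v0 Hl Hg e0 e1.
have n0 : (0 < L.-1)%N by rewrite -subn1 subn_gt0.
have le1 (u : {ffun 'I_K -> R}) c : (forall i, 0 <= u i) -> \sum_(i < K) u i = 1 -> u c <= 1.
  move=> u0 u1; rewrite -u1 (bigD1 c) //= lerDl; exact: sumr_ge0.
have m1 : \sum_(i < K) mixture e p q i = 1.
  under eq_bigr do rewrite mixtureE.
  by rewrite big_split /= -!mulr_sumr p1 q1 !mulr1 subrK.
rewrite !payoffE //.
set G := fun c => s c * g R L.-1 (mixture e p q c).
have term c : (q c - p c) * (G c - v) <= 0 /\ (q c < p c -> (q c - p c) * (G c - v) < 0).
  rewrite /G mixtureE.
  have pc1 := le1 p c p0 p1; have qc1 := le1 q c q0 q1.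
  have := p0 c; have := q0 c; have := s0 c => sc0 qc0 pc0.
  case: (ltgtP (q c) (p c)) => h.
  - have pg0 : 0 < p c by lra.
    have H1 := Hg c pg0.
    have gp0 : 0 < g R L.-1 (p c) by apply: g_gt0.
    have sc : 0 < s c.
      rewrite lt0r sc0 andbT; apply/eqP => s00; move: H1; rewrite s00 mul0r; lra.
    have H2 : g R L.-1 (p c) < g R L.-1 ((1 - e) * p c + e * q c).
      apply: g_lt => //; nra.
    have H3 : s c * g R L.-1 (p c) < s c * g R L.-1 ((1 - e) * p c + e * q c).
      by rewrite ltr_pM2l.
    split; nra.
  - have pl1 : p c < 1 by lra.
    have H1 := Hl c pl1.
    have H2 : g R L.-1 ((1 - e) * p c + e * q c) < g R L.-1 (p c).
      apply: g_lt => //; nra.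
    have H3 : s c * g R L.-1 ((1 - e) * p c + e * q c) <= s c * g R L.-1 (p c).
      by rewrite ler_wpM2l // ltW.
    split; [nra | lra].
  - by rewrite h subrr mul0r; split => //; rewrite ltxx.
have [c0 hc0] : exists c0, q c0 < p c0.
  apply: contrapT => hn; apply: qp; apply/ffunP => c; apply/eqP.
  rewrite eq_le; apply/andP; split; last by rewrite leNgt; apply/negP => h; apply: hn; exists c.
  rewrite leNgt; apply/negP => h.
  have : \sum_(i < K) p i < \sum_(i < K) q i.
    rewrite (bigD1 c) //= [X in _ < X](bigD1 c) //=; apply: ltr_leD => //.
    by apply: ler_sum => i _; rewrite leNgt; apply/negP => h'; apply: hn; exists i.
  by rewrite p1 q1 ltxx.
have E : \sum_(c < K) q c * s c * g R L.-1 (mixture e p q c) =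
         \sum_(c < K) (p c * G c + (q c - p c) * (G c - v)).
  transitivity (\sum_(c < K) (q c * G c - (q c - p c) * v)); last first.
    by apply: eq_bigr => c _; ring.
  rewrite sumrB -mulr_suml sumrB p1 q1 subrr mul0r subr0.
  by apply: eq_bigr => c _; rewrite /G; ring.
have hG c : s c * g R L.-1 (mixture e p q c) = G c by [].
rewrite E (bigD1 c0) //= [X in _ < X](bigD1 c0) //=.
have [_ /(_ hc0) h0] := term c0.
apply: ltr_leD; first by rewrite -mulrA hG; lra.
by apply: ler_sum => c _; rewrite -mulrA hG; have [h _] := term c; lra.
Qed.
End Key.

Section Exist.
Variable R : realType.
Lemma existence K L (s : 'I_K -> R) : (1 < L)%N -> (forall i, 0 <= s i) -> (exists i, s i != 0) ->
 exists p : {ffun 'I_K -> R}, exists v : R, [/\ is_strategy p, 0 < v,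
   (forall c, p c < 1 -> s c * g R L.-1 (p c) <= v) &
   (forall c, 0 < p c -> v <= s c * g R L.-1 (p c))].
Proof.
move=> L1 s0 [i0 si0].
have n0 : (0 < L.-1)%N by rewrite -subn1 subn_gt0.
move: n0; set n := L.-1 => n0.
pose phi c x := s c * g R n x.
pose P c w := fun x => 0 <= x <= 1 /\ (x < 1 -> phi c x <= w) /\ (0 < x -> w <= phi c x).
have phi_dec c : 0 < s c -> forall a b, 0 <= a -> a < b -> b <= 1 -> phi c b < phi c a.
  by move=> sc a b *; rewrite /phi ltr_pM2l // g_lt.
have phi_cont c : continuous (phi c).
  have -> : phi c = horner ((s c)%:P * ((n.+1%:R)^-1%:P * \sum_(j < n.+1) (1 - 'X)^+j)).
    by apply: funext => y; rewrite hornerM hornerC -g_horner.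
  exact: continuous_horner.
have Pex c w : 0 < s c -> exists x, P c w x.
  move=> sc.
  have phi0 : phi c 0 = s c by rewrite /phi g0 mulr1.
  case: (lerP w (phi c 1)) => h1.
    exists 1; split; first by rewrite ler01 lexx.
    by split => //; rewrite ltxx.
  case: (lerP (phi c 0) w) => h2.
    exists 0; split; first by rewrite lexx ler01.
    by split => //; rewrite ltxx.
  have hmin : Num.min (phi c 0) (phi c 1) <= w <= Num.max (phi c 0) (phi c 1).
    by rewrite ge_min le_max (ltW h1) (ltW h2) orbT.
  have := @IVT R (phi c) 0 1 w ler01 (continuous_subspaceT (A := `[_, _]%classic) (phi_cont c)) hmin.
  case=> x; rewrite in_itv /= => /andP[x0 x1] fx.
  exists x; split; first by rewrite x0 x1.
  by rewrite fx; split.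
pose psi c w := if 0 < s c then xget 0 (P c w) else 0.
have psiP c w : 0 < s c -> P c w (psi c w).
  by move=> sc; rewrite /psi sc; apply: xgetPex; apply: Pex.
have psi0 c w : ~~ (0 < s c) -> psi c w = 0 by move=> h; rewrite /psi (negbTE h).
have psi_ge0 c w : 0 <= psi c w.
  case: (boolP (0 < s c)) => sc; last by rewrite psi0.
  by case: (psiP c w sc) => /andP[].
have psi_c c : continuous (psi c).
  case: (boolP (0 < s c)) => sc.
    apply: (@psi_cont R (phi c) (psi c) (phi_dec c sc)) => w.
    - by case: (psiP c w sc).
    - by case: (psiP c w sc) => _ [].
    - by case: (psiP c w sc) => _ [].
  have -> : psi c = fun _ => 0 by apply: funext => w; rewrite psi0.
  exact: cst_continuous.
pose Psi w := \sum_(c < K) psi c w.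
have Psi_cont : continuous Psi.
  by apply: continuous_big => //; exact: add_continuous.
have [c0 _ Hc0] := @arg_maxP _ R 'I_K i0 xpredT s isT.
have si0' : 0 < s i0 by rewrite lt0r si0 s0.
have sc0 : 0 < s c0 by apply: (lt_le_trans si0'); apply: Hc0.
have a0 : 0 < phi c0 1 by rewrite /phi mulr_gt0 // g_gt0 // ler01.
have phi00 : phi c0 0 = s c0 by rewrite /phi g0 mulr1.
have ab : phi c0 1 <= s c0.
  by rewrite -phi00 ltW // phi_dec // ?ltr01.
have Pa : 1 <= Psi (phi c0 1).
  rewrite /Psi (bigD1 c0) //=.
  have -> : psi c0 (phi c0 1) = 1.
    case: (psiP c0 (phi c0 1) sc0) => /andP[x0 x1] [h1 h2].
    case: (ltP (psi c0 (phi c0 1)) 1) => h; last by apply/le_anti; rewrite h x1.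
    have := h1 h; have := phi_dec c0 sc0 _ _ x0 h (lexx 1); lra.
  by rewrite lerDl; apply: sumr_ge0.
have Pb : Psi (s c0) = 0.
  rewrite /Psi big1 // => c _.
  case: (boolP (0 < s c)) => sc; last by rewrite psi0.
  case: (psiP c (s c0) sc) => /andP[x0 x1] [h1 h2].
  case: (ltP 0 (psi c (s c0))) => h; last by apply/le_anti; rewrite h x0.
  have := h2 h; have := phi_dec c sc _ _ (lexx 0) h x1.
  have : phi c 0 = s c by rewrite /phi g0 mulr1.
  have hc : s c <= s c0 := Hc0 c isT; lra.
have hmin : Num.min (Psi (phi c0 1)) (Psi (s c0)) <= 1 <= Num.max (Psi (phi c0 1)) (Psi (s c0)).
  by rewrite ge_min le_max Pa Pb ler01 orbT.
have := @IVT R Psi _ _ 1 ab (continuous_subspaceT (A := `[_, _]%classic) Psi_cont) hmin.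
case=> v; rewrite in_itv /= => /andP[av vb] Pv.
exists [ffun c => psi c v], v; split.
- split => [i|]; first by rewrite ffunE.
  by rewrite -Pv /Psi; apply: eq_bigr => c _; rewrite ffunE.
- lra.
- move=> c; rewrite ffunE; case: (boolP (0 < s c)) => sc.
    by case: (psiP c v sc) => _ [].
  have -> : s c = 0 by apply/le_anti; rewrite s0 andbT leNgt.
  move=> _; rewrite mul0r; lra.
- move=> c; rewrite ffunE; case: (boolP (0 < s c)) => sc.
    by case: (psiP c v sc) => _ [].
  by rewrite psi0 // ltxx.
Qed.
End Exist.

Theorem theorem2 (R : realType) (K L : nat) (s : 'I_K -> R) :
  (2 <= K)%N -> (2 <= L)%N ->
  (forall i, 0 <= s i <= 1) -> (exists i, s i != 0) ->
  exists! p : {ffun 'I_K -> R}, is_ESS L s p.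
Proof.
move=> K2 L2 s01 sne.
have s0 i : 0 <= s i by case/andP: (s01 i).
have [p [v [ps v0 Hl Hg]]] := @existence R K L s L2 s0 sne.
have ess : is_ESS L s p.
  split => // q qs qp; exists 1 => [|e e0 e1]; first exact: ltr01.
  exact: (@key R K L s p q v e L2 s0 ps qs qp v0 Hl Hg e0 (ltW e1)).
exists p; split; first exact: ess.
move=> p' [p's Hp'].
case: (pselect (p = p')) => [//|pp'].
have [eb eb0 Heb] := Hp' p ps pp'.
have [e [e0 e_eb e1]] : exists e : R, [/\ 0 < e, e < eb & e < 1].
  case: (leP eb 1) => h; [exists (eb / 2) | exists (1 / 2)]; split; lra.
have H1 := Heb e e0 e_eb.
have p'p : p' <> p by move=> h; apply: pp'; rewrite h.
have e1' : 0 < 1 - e by lra.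
have e2 : 1 - e <= 1 by lra.
have H2 := @key R K L s p p' v (1 - e) L2 s0 ps p's p'p v0 Hl Hg e1' e2.
have E : mixture (1 - e) p p' = mixture e p' p.
  by apply/ffunP => c; rewrite !mixtureE; ring.
rewrite E in H2; by have := lt_trans H1 H2; rewrite ltxx.
Qed.
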